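(* Let $p$ be a prime and $k\geq 4$, and assume hypothesis $\mathcal{H}(k)$: for every integer $3\leq k'<k$, every $0<\varepsilon<1$, every $n\geq 1$ and all $Z_1,\dots,Z_{k'}\subseteq\mathbb{F}_p^n$ such that $Z_1\times\dots\times Z_{k'}$ contains at least $\varepsilon N$ pairwise disjoint $k'$-cycles, the number of $k'$-cycles in $Z_1\times\dots\times Z_{k'}$ is at least $\varepsilon^{C_{p,k'}}N^{k'-1}$. Work in the standing setting below (sets $X_1,\dots,X_k$, numbers $\delta'>0$, $\theta\geq1$, $\alpha$, bad tuples). Let $M$ be a collection of $k$-cycles in $X_1\times\dots\times X_k$ with $|M|\geq r\delta' N^{k-1}$ for some real $0<r<1$. Let $I_1,I_2\subseteq[k]$ be disjoint with $I_1\cup I_2=[k]$, $2\leq|I_1|\leq k-2$ and $2\leq |I_2|\leq k-2$. Assume: (i) for every $I_1$-tuple $(x_i)_{i\in I_1}\in\prod_{i\in I_1}X_i$, there are at most $2\alpha^{k-|I_1|-1}N^{k-|I_1|-1}$ $k$-cycles $(x_1,\dots,x_k)\in M$ extending it (i.e. whose coordinates indexed by $I_1$ are the given ones); (ii) for every $(x_1,\dots,x_k)\in M$, the $I_2$-tuple $(x_i)_{i\in I_2}$ is not bad. Then $$\delta'\theta^{C_{p,k}}\geq\left(\frac{r}{4k}\right)^{C_{p,k}}.$$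
   Context: Let $p$ be a fixed prime, $n\geq1$, $N=p^n$, $[m]=\{1,\dots,m\}$. For sets $X_1,\dots,X_k\subseteq\mathbb{F}_p^n$, a $k$-cycle is a tuple $(x_1,\dots,x_k)\in X_1\times\dots\times X_k$ with $x_1+\dots+x_k=0$; two $k$-cycles are disjoint if they differ in every coordinate. Define $0<c_{p,3}<1$ by $\inf_{0<t<1}\frac{t^0+\dots+t^{p-1}}{t^{(p-1)/3}}=p^{1-c_{p,3}}$, $C_{p,3}=1+\frac{1}{c_{p,3}}$, $C_{p,k}=(k-2)(C_{p,3}-1)+1$. Standing setting: $k\geq4$, $X_1,\dots,X_k\subseteq\mathbb{F}_p^n$, the number of $k$-cycles in $X_1\times\dots\times X_k$ equals $\delta'N^{k-1}$ with $\delta'>0$, and $\theta\geq 1$ is such that for each $i\in[k]$ every point of $X_i$ occurs as $x_i$ in at most $\theta\delta'N^{k-2}$ $k$-cycles. Put $\alpha=(\theta\delta')^{1/(k-2)}$. For $I\subseteq[k]$ with $1\leq|I|\leq k-2$, an $I$-tuple is an element $(x_i)_{i\in I}\in\prod_{i\in I}X_i$; it is called bad if there are at least $2\alpha^{k-|I|-1}N^{k-|I|-1}$ $k$-cycles $(x_1,\dots,x_k)\in X_1\times\dots\times X_k$ whose coordinates indexed by $I$ coincide with the given tuple. *)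

(* Defs.v *)
From HB Require Import structures.
From mathcomp Require Import all_boot all_algebra.
From Stdlib Require Import Reals.

Set Implicit Arguments.
Unset Strict Implicit.
Unset Printing Implicit Defensive.

(* A point of F_p^n; a k-tuple of points is a finite function 'I_k -> F_p^n
   (indices are 0-based: 'I_k stands for [k] = {1,...,k}). *)
Definition tup (p n k : nat) := {ffun 'I_k -> 'rV['F_p]_n}.

Section RingSc.
Local Open Scope ring_scope.
Definition kcycles (p n k : nat) (X : 'I_k -> {set 'rV['F_p]_n}) : {set tup p n k} :=
  [set x : tup p n k | [forall i, x i \in X i] && (\sum_(i < k) x i == 0)].
End RingSc.

Definition disjoint_tup (p n k : nat) (x y : tup p n k) : Prop :=
  forall i : 'I_k, x i <> y i.

Definition agree_on (p n k : nat) (I : {set 'I_k}) (x y : tup p n k) : bool :=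
  [forall i in I, x i == y i].

(* An I-tuple is represented by any y with y i \in X i for i \in I
   (the coordinates of y outside I are irrelevant). *)
Definition is_Ituple (p n k : nat) (X : 'I_k -> {set 'rV['F_p]_n})
  (I : {set 'I_k}) (y : tup p n k) : bool :=
  [forall i in I, y i \in X i].

Definition ext_count (p n k : nat) (S : {set tup p n k}) (I : {set 'I_k})
  (y : tup p n k) : nat :=
  #|[set x in S | agree_on I x y]|.

Local Open Scope R_scope.

Definition NN (p n : nat) : R := INR p ^ n.

Definition cfun (p : nat) (t : R) : R :=
  sum_f_R0 (fun j => t ^ j) (p - 1) / Rpower t ((INR p - 1) / 3).

Definition is_inf (A : R -> Prop) (m : R) : Prop :=
  (forall y, A y -> m <= y) /\ (forall b, (forall y, A y -> b <= y) -> b <= m).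

Definition is_cp3 (p : nat) (c : R) : Prop :=
  is_inf (fun y => exists t, 0 < t < 1 /\ y = cfun p t) (Rpower (INR p) (1 - c)).

Definition C3 (c : R) : R := 1 + / c.
Definition Ck (c : R) (k : nat) : R := INR (k - 2) * (C3 c - 1) + 1.

Definition hypH (p : nat) (c : R) (k : nat) : Prop :=
  forall (k' : nat), (3 <= k')%nat -> (k' < k)%nat ->
  forall eps : R, 0 < eps < 1 ->
  forall n : nat, (1 <= n)%nat ->
  forall Z : 'I_k' -> {set 'rV['F_p]_n},
    (exists S : {set tup p n k'},
        S \subset kcycles Z /\
        (forall x y, x \in S -> y \in S -> x <> y -> disjoint_tup x y) /\
        INR #|S| >= eps * NN p n) ->
    INR #|kcycles Z| >= Rpower eps (Ck c k') * NN p n ^ (k' - 1).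

Definition alpha (theta delta' : R) (k : nat) : R :=
  Rpower (theta * delta') (/ INR (k - 2)).

Definition bad (p n k : nat) (X : 'I_k -> {set 'rV['F_p]_n}) (theta delta' : R)
  (I : {set 'I_k}) (y : tup p n k) : Prop :=
  INR (ext_count (kcycles X) I y) >=
    2 * alpha theta delta' k ^ (k - #|I| - 1) * NN p n ^ (k - #|I| - 1).

(* Main.v *)
Require Import Defs.
From HB Require Import structures.
From mathcomp Require Import all_boot all_algebra.
From Stdlib Require Import Reals.
From Stdlib Require Import Lra Lia.
From mathcomp Require Import zify.

Unset Printing Implicit Defensive.
Section RS0.
Local Open Scope ring_scope.
Lemma kcyclesP {p n k : nat} {X : 'I_k -> {set 'rV['F_p]_n}} {x : tup p n k} : reflect ((forall i, x i \in X i) /\ \sum_i x i = 0) (x \in kcycles X).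
Proof.
rewrite inE; apply: (iffP andP) => [[/forallP h /eqP e]|[h e]]; split => //.
  by apply/forallP.
by apply/eqP.
Qed.

End RS0.

Section RS.
Local Open Scope ring_scope.
Import GRing.Theory.
Variables (p n k : nat).
Implicit Types (x s y : tup p n k).

Definition s1 (I1 : {set 'I_k}) x : 'rV['F_p]_n := \sum_(i in I1) x i.
Definition conf (I1 : {set 'I_k}) s x : bool := [exists i in I1, x i == s i] || (s1 I1 x == s1 I1 s).
Definition psi (I1 : {set 'I_k}) x : tup p n #|I1|.+1 :=
  [ffun j => match unlift ord_max j with Some j' => x (enum_val j') | None => - s1 I1 x end].
Definition Zs (X : 'I_k -> {set 'rV['F_p]_n}) (I1 : {set 'I_k}) (W : {set 'rV['F_p]_n}) (j : 'I_#|I1|.+1) :=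
  match unlift ord_max j with Some j' => X (enum_val j') | None => W end.
Definition phi (I1 : {set 'I_k}) s x : tup p n k := [ffun i => if i \in I1 then x i else s i].
Definition chi (I1 : {set 'I_k}) s i0 (H : i0 \in I1) (z : tup p n #|I1|.+1) : tup p n k :=
  [ffun i => if i \in I1 then z (lift ord_max (enum_rank_in H i)) else s i].

Lemma sum_ordS (a : nat) (F : 'I_a.+1 -> 'rV['F_p]_n) :
  \sum_(j < a.+1) F j = F ord_max + \sum_(j < a) F (lift ord_max j).
Proof. by rewrite (bigD1_ord ord_max) //. Qed.

Lemma s1_enum (I1 : {set 'I_k}) x : s1 I1 x = \sum_(j < #|I1|) x (enum_val j).
Proof. by rewrite /s1 (big_enum_val (fun i => x i)). Qed.

Lemma psi_sum (I1 : {set 'I_k}) x : \sum_j psi I1 x j = 0.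
Proof.
rewrite sum_ordS ffunE unlift_none.
under eq_bigr do rewrite ffunE liftK.
by rewrite -s1_enum addNr.
Qed.


Variable X : 'I_k -> {set 'rV['F_p]_n}.

Lemma psi_in (I1 : {set 'I_k}) (W : {set 'rV['F_p]_n}) s : s \in kcycles X -> - s1 I1 s \in W ->
  psi I1 s \in kcycles (Zs X I1 W).
Proof.
move=> Hs hW; have [hs _] := kcyclesP Hs. apply/kcyclesP.  split; last exact: psi_sum.
by move=> j; rewrite ffunE /Zs; case: unliftP.
Qed.

Lemma conf_refl (I1 : {set 'I_k}) s : conf I1 s s.
Proof. by rewrite /conf eqxx orbT. Qed.

Lemma psi_disj (I1 : {set 'I_k}) s x : ~~ conf I1 s x -> disjoint_tup (psi I1 s) (psi I1 x).
Proof.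
rewrite /conf negb_or negb_exists_in => /andP [/forall_inP h1 h2] j.
rewrite !ffunE; case: unliftP => [j' _|_].
  move=> e; have := h1 _ (enum_valP j'); by rewrite e eqxx.
by move/oppr_inj => e; move: h2; rewrite e eqxx.
Qed.


Lemma sum_split (I1 : {set 'I_k}) (F : 'I_k -> 'rV['F_p]_n) :
  \sum_i F i = \sum_(i in I1) F i + \sum_(i | i \notin I1) F i.
Proof. by rewrite (bigID (mem I1)) /=. Qed.

Lemma chi_in (I1 I2 : {set 'I_k}) s i0 (H : i0 \in I1) (W : {set 'rV['F_p]_n}) z :
  [disjoint I1 & I2] -> s \in kcycles X -> z \in kcycles (Zs X I1 W) ->
  z ord_max = - s1 I1 s ->
  chi I1 s i0 H z \in [set y in kcycles X | agree_on I2 y s].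
Proof.
move=> dI Hs Hz ez; have [hs es] := kcyclesP Hs; have [hz ez0] := kcyclesP Hz.
rewrite inE; apply/andP; split.
  apply/kcyclesP; split.
    move=> i; rewrite ffunE; case: ifP => hi //.
    by move: (hz (lift ord_max (enum_rank_in H i))); rewrite /Zs liftK enum_rankK_in.
  rewrite (sum_split I1).
  under eq_bigr => i hi do rewrite ffunE hi.
  under [X in _ + X]eq_bigr => i hi do rewrite ffunE (negbTE hi).
  rewrite (big_enum_val (fun i => z (lift ord_max (enum_rank_in H i)))) /=.
  under eq_bigr do rewrite enum_valK_in.
  move: ez0; rewrite sum_ordS ez => ez0.
  have -> : \sum_(j < #|I1|) z (lift ord_max j) = s1 I1 s.
    by apply: (@addrI _ (- s1 I1 s)); rewrite ez0 addNr.
  by rewrite /s1 -sum_split.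
apply/forall_inP => i hi; rewrite ffunE (disjointFl dI hi) //.
Qed.

Lemma chi_inj (I1 : {set 'I_k}) s i0 (H : i0 \in I1) (z z' : tup p n #|I1|.+1) :
  z ord_max = z' ord_max -> chi I1 s i0 H z = chi I1 s i0 H z' -> z = z'.
Proof.
move=> ez e; apply/ffunP => j; case: (unliftP ord_max j) => [j' ->|->] //.
have := congr1 (fun f : tup p n k => f (enum_val j')) e.
by rewrite !ffunE enum_valP enum_valK_in.
Qed.

Lemma phi_in (I1 I2 : {set 'I_k}) s x : [disjoint I1 & I2] -> s \in kcycles X ->
  x \in kcycles X -> s1 I1 x = s1 I1 s ->
  phi I1 s x \in [set y in kcycles X | agree_on I2 y s].
Proof.
move=> dI Hs Hx e; have [hs es] := kcyclesP Hs; have [hx ex] := kcyclesP Hx.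
rewrite inE; apply/andP; split.
  apply/kcyclesP; split.
    by move=> i; rewrite ffunE; case: ifP.
  rewrite (sum_split I1).
  under eq_bigr => i hi do rewrite ffunE hi.
  under [X in _ + X]eq_bigr => i hi do rewrite ffunE (negbTE hi).
  by rewrite -/(s1 I1 x) e /s1 -sum_split.
apply/forall_inP => i hi; rewrite ffunE (disjointFl dI hi) //.
Qed.

Lemma phi_agree (I1 : {set 'I_k}) s x : agree_on I1 x (phi I1 s x).
Proof. by apply/forall_inP => i hi; rewrite ffunE hi. Qed.


Lemma conf_sym (I1 : {set 'I_k}) s x : conf I1 s x = conf I1 x s.
Proof.
rewrite /conf eq_sym; congr (_ || _); apply/exists_inP/exists_inP => [] [i hi /eqP e];
  by exists i => //; rewrite e.
Qed.

Lemma Zs_max (I1 : {set 'I_k}) (W : {set 'rV['F_p]_n}) : Zs X I1 W ord_max = W.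
Proof. by rewrite /Zs unlift_none. Qed.

Definition Wset (I1 : {set 'I_k}) (S : {set tup p n k}) : {set 'rV['F_p]_n} :=
  [set - s1 I1 s | s in S].

Lemma Wset_in (I1 : {set 'I_k}) (S : {set tup p n k}) s : s \in S -> - s1 I1 s \in Wset I1 S.
Proof. by move=> h; apply: imset_f. Qed.

Lemma Wset_inv (I1 : {set 'I_k}) (S : {set tup p n k}) w : w \in Wset I1 S ->
  exists2 s, s \in S & w = - s1 I1 s.
Proof. by case/imsetP => s hs ->; exists s. Qed.

Lemma psi_max (I1 : {set 'I_k}) s : psi I1 s ord_max = - s1 I1 s.
Proof. by rewrite ffunE unlift_none. Qed.

End RS.

Arguments s1 {p n k}. Arguments conf {p n k}. Arguments psi {p n k}. Arguments Zs {p n k}.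
Arguments phi {p n k}. Arguments chi {p n k}. Arguments Wset {p n k}.
Arguments sum_ordS {p n}. Arguments s1_enum {p n k}. Arguments psi_sum {p n k}.
Arguments psi_in {p n k X}. Arguments conf_refl {p n k}. Arguments psi_disj {p n k}.
Arguments sum_split {p n k}. Arguments chi_in {p n k X}. Arguments chi_inj {p n k}.
Arguments phi_in {p n k X}. Arguments phi_agree {p n k}. Arguments conf_sym {p n k}.
Arguments Zs_max {p n k}. Arguments Wset_in {p n k}. Arguments Wset_inv {p n k}.
Arguments psi_max {p n k}.

Local Open Scope R_scope.
Lemma INR_sum_le (I : finType) (T : {set I}) (g : I -> nat) (c : R) :
  (forall y, y \in T -> INR (g y) <= c) ->
  INR (\sum_(y in T) g y)%N <= INR #|T| * c.
Proof.
move=> H; rewrite -sum1_card.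
apply: (big_ind2 (fun u v : nat => INR u <= INR v * c)).
- simpl; lra.
- move=> x1 x2 y1 y2 h1 h2; rewrite !plus_INR; lra.
- by move=> i /H; rewrite /= Rmult_1_l.
Qed.

Lemma fiber_bound (T1 T2 : finType) (A : {set T1}) (T : {set T2}) (f : T1 -> T2) (c : R) :
  (forall x, x \in A -> f x \in T) ->
  (forall y, y \in T -> INR #|[set x in A | f x == y]| <= c) ->
  INR #|A| <= INR #|T| * c.
Proof.
move=> HT Hc.
have -> : #|A| = (\sum_(y in T) #|[set x in A | f x == y]|)%N.
  rewrite -sum1_card (partition_big f (mem T)) //=.
  apply: eq_bigr => y _; rewrite -sum1_card; apply: eq_bigl => x.
  by rewrite inE.
exact: INR_sum_le.
Qed.

Section RS.
Local Open Scope ring_scope.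
Lemma kcyc_zero p : kcycles (fun _ : 'I_3 => [set (0 : 'rV['F_p]_1)]) = [set [ffun _ => 0]].
Proof.
  apply/setP => x; rewrite !inE; apply/idP/idP.
  - case/andP => /forallP hx _; apply/eqP/ffunP => i; rewrite ffunE.
    by move: (hx i); rewrite inE => /eqP.
  - move/eqP => ->; apply/andP; split.
      by apply/forallP => i; rewrite ffunE inE.
    by apply/eqP; apply: big1 => i _; rewrite ffunE.
Qed.
End RS.

Lemma C3_ge2 p c k : prime p -> (4 <= k)%nat -> hypH p c k -> 2 <= C3 c.
Proof.
move=> pp k4 H.
have p2 : (1 < p)%nat := prime_gt1 pp.
pose Z : 'I_3 -> {set 'rV['F_p]_1} := fun _ => [set @GRing.zero _].
have EK := kcyc_zero p.
have pR : 1 < INR p by apply: (lt_INR 1); apply/ltP.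
have := H 3%nat isT k4 (/ INR p) ltac:(split; [apply Rinv_0_lt_compat; lra| rewrite -Rinv_1; apply Rinv_1_lt_contravar; lra]) 1%nat isT Z.
have hS : exists S : {set tup p 1 3},
        S \subset kcycles Z /\
        (forall x y, x \in S -> y \in S -> x <> y -> disjoint_tup x y) /\
        INR #|S| >= / INR p * NN p 1.
  exists (kcycles Z); split; first exact: subxx.
  split.
    move=> x y; rewrite EK !inE => /eqP -> /eqP -> //.
  rewrite EK cards1 /NN /= Rmult_1_r Rinv_l; lra.
move=> /(_ hS) /Rge_le.
rewrite EK cards1 /NN /Ck /= => h.
have : Rpower (/ INR p) (1 * (C3 c - 1) + 1) * ((INR p * 1) * (INR p * 1)) <= 1 by lra.
rewrite !Rmult_1_r Rmult_1_l /Rpower ln_Rinv; last lra.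
rewrite -{2 3}(exp_ln (INR p)); last lra.
rewrite -!exp_plus => h2.
apply: Rnot_lt_le => h3.
have lp : 0 < ln (INR p) by rewrite -ln_1; apply: ln_increasing; lra.
have : 0 < (C3 c - 1 + 1) * - ln (INR p) + (ln (INR p) + ln (INR p)) by nra.
move=> h4; have := exp_increasing _ _ h4; rewrite exp_0; lra.
Qed.

Lemma ln_le' x y : 0 < x -> x <= y -> ln x <= ln y.
Proof. move=> hx [h|->]; [left; exact: ln_increasing | lra]. Qed.

Lemma exp_le' x y : x <= y -> exp x <= exp y.
Proof. move=> [h|->]; [left; exact: exp_increasing | lra]. Qed.

Lemma final_real A K g e r th d ka k :
  1 <= A -> A + 1 <= K -> 1 <= g -> 0 < e < 1 -> 0 < r < 1 -> 1 <= th -> 0 < d ->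
  1 <= ka -> 2 * ka <= 4 * k -> r <= ka * th * e ->
  Rpower e (A * g + 1) <= 2 * e * Rpower (th * d) (/ K * A) ->
  d * Rpower th (K * g + 1) >= Rpower (r / (4 * k)) (K * g + 1).
Proof.
move=> hA hK hg he hr hth hd hka hk hre H.
have thp : 0 < th by lra.
have tdp : 0 < th * d by nra.
have kp : 0 < k by lra.
have Kp : 0 < K by lra.
have Ap : 0 < A by lra.
have L1 : (A * g + 1) * ln e <= ln 2 + ln e + / K * A * (ln th + ln d).
  have := ln_le' _ _ (exp_pos _) H.
  rewrite ln_exp ln_mult; [|nra| exact: exp_pos].
  by rewrite ln_mult ?ln_exp ?ln_mult; lra.
have L2 : ln r <= ln ka + ln th + ln e.
  have := ln_le' _ _ (proj1 hr) hre.
  by rewrite !ln_mult; nra.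
have l2 : 0 < ln 2 by rewrite -ln_1; apply: ln_increasing; lra.
have lr : ln r < 0 by rewrite -ln_1; apply: ln_increasing; lra.
have lth : 0 <= ln th by rewrite -ln_1; apply: ln_le'; lra.
have l4k : ln 2 + ln ka <= ln (4 * k).
  rewrite -ln_mult; [apply: ln_le'|..]; lra.
have lka : 0 <= ln ka by rewrite -ln_1; apply: ln_le'; lra.
set Le := ln e in L1 L2 *. set Lt := ln th in L1 L2 lth *. set Ld := ln d in L1 *.
set Lr := ln r in L2 lr *. set L4 := ln (4 * k) in l4k *. set La := ln ka in L2 l4k lka *.
set L2' := ln 2 in L1 l2 l4k *.
have E1 : A * g * Le <= L2' + / K * A * (Lt + Ld) by lra.
pose q := K / A.
have hq : q * A = K by rewrite /q; field; lra.
have hqK : q <= K.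
  apply: (Rmult_le_reg_r A); first lra.
  rewrite hq; nra.
have qp : 0 < q by rewrite /q; apply: Rdiv_lt_0_compat.
have E2 : K * g * Le <= q * L2' + Lt + Ld.
  have := Rmult_le_compat_l q _ _ (Rlt_le _ _ qp) E1.
  have -> : q * (A * g * Le) = K * g * Le by rewrite -hq; ring.
  have -> : q * (L2' + / K * A * (Lt + Ld)) = q * L2' + (q * A) * / K * (Lt + Ld) by ring.
  by rewrite hq Rinv_r; lra.
have E3 : K * g * (Lr - La - Lt) <= K * g * Le.
  apply: Rmult_le_compat_l; nra.
have E4 : q * L2' <= K * g * (L4 - La).
  have h1 : q * L2' <= K * L2' by nra.
  have h2 : K * L2' <= K * g * L2'.
    have h0 : 0 <= K * L2' by nra.
    have := Rmult_le_compat_l _ _ _ h0 hg. lra.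
  have h3 : K * g * L2' <= K * g * (L4 - La) by apply: Rmult_le_compat_l; nra.
  lra.
have E5 : (K * g + 1) * (Lr - L4) <= K * g * (Lr - L4).
  have : Lr - L4 < 0 by lra.
  nra.
apply: Rle_ge.
rewrite /Rpower -{1}(exp_ln d hd) -exp_plus.
apply: exp_le'.
rewrite ln_mult; [|lra|]; last by apply: Rinv_0_lt_compat; lra.
rewrite ln_Rinv; last lra.
rewrite -/L4 -/Lr -/Lt -/Ld.
nra.
Qed.

Lemma NN_INR p n : INR (expn p n) = NN p n.
Proof.
rewrite /NN; elim: n => [|n IH] //=.
by rewrite expnS mult_INR IH.
Qed.

Theorem lemma6 (p : nat) (c : R) (k n : nat)
  (X : 'I_k -> {set 'rV['F_p]_n}) (delta' theta r : R)
  (M : {set tup p n k}) (I1 I2 : {set 'I_k}) :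
  prime p -> is_cp3 p c -> (4 <= k)%nat -> hypH p c k -> (1 <= n)%nat ->
  (* standing setting *)
  0 < delta' ->
  INR #|kcycles X| = delta' * NN p n ^ (k - 1) ->
  1 <= theta ->
  (forall (i : 'I_k) (v : 'rV['F_p]_n), v \in X i ->
     INR #|[set x in kcycles X | x i == v]| <= theta * delta' * NN p n ^ (k - 2)) ->
  (* the collection M *)
  M \subset kcycles X ->
  0 < r < 1 ->
  INR #|M| >= r * delta' * NN p n ^ (k - 1) ->
  (* the partition I1, I2 *)
  [disjoint I1 & I2] -> I1 :|: I2 = setT ->
  (2 <= #|I1| <= k - 2)%nat -> (2 <= #|I2| <= k - 2)%nat ->
  (* (i) *)
  (forall y : tup p n k, is_Ituple X I1 y ->
     INR (ext_count M I1 y) <=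
       2 * alpha theta delta' k ^ (k - #|I1| - 1) * NN p n ^ (k - #|I1| - 1)) ->
  (* (ii) *)
  (forall x : tup p n k, x \in M -> ~ bad X theta delta' I2 x) ->
  delta' * Rpower theta (Ck c k) >= Rpower (r / (4 * INR k)) (Ck c k).
Proof.
move=> pp cp k4 HH n1 dpos Hcard th1 Hdeg MX [r0 r1] HM dI UI hI1 hI2 Hi Hii.
have g2 := C3_ge2 p c k pp k4 HH.
case/andP: hI1 => a2 ak; case/andP: hI2 => b2 bk.
have hab : (#|I1| + #|I2|)%nat = k.
  have hT : #|[set: 'I_k]| = k by rewrite cardsT card_ord.
  have := cardsUI I1 I2; rewrite UI hT (disjoint_setI0 dI) cards0 addn0.
  by move=> e; rewrite -e.
have p2 : (1 < p)%nat := prime_gt1 pp.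
pose N := expn p n.
have NNe : NN p n = INR N by rewrite NN_INR.
have N2 : (2 <= N)%nat.
  have := ltn_expl n p2; rewrite -/N; lia.
have NNpos : 2 <= NN p n by rewrite NNe; apply: (le_INR 2); apply/leP.
have [i0 i0I] : exists i0, i0 \in I1.
  by apply/card_gt0P; lia.
set a := #|I1| in a2 ak hab Hi *.
set b := #|I2| in b2 bk hab Hii *.
set al := alpha theta delta' k.
have alpos : 0 < al by rewrite /al /alpha /Rpower; apply: exp_pos.
set D1 := 2 * al ^ (k - a - 1) * NN p n ^ (k - a - 1).
set D2 := 2 * al ^ (k - b - 1) * NN p n ^ (k - b - 1).
set E := NN p n ^ (k - 2).
have Epos : 0 < E by apply: pow_lt; lra.
have D1pos : 0 <= D1.
  rewrite /D1; apply: Rmult_le_pos; [apply: Rmult_le_pos; [lra|]|]; apply: pow_le; lra.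
have D2pos : 0 <= D2.
  rewrite /D2; apply: Rmult_le_pos; [apply: Rmult_le_pos; [lra|]|]; apply: pow_le; lra.
have Kpos : 0 < INR (k - 2) by apply: (lt_INR 0); lia.
have alk : al ^ (k - 2) = theta * delta'.
  rewrite -Rpower_pow // /al /alpha Rpower_mult Rinv_l; last lra.
  by rewrite Rpower_1 //; nra.
have D12 : D1 * D2 = 4 * (theta * delta') * E.
  have e1 : ((k - a - 1) + (k - b - 1) = k - 2)%nat by lia.
  rewrite /D1 /D2 /E -alk -e1 !pow_add; ring.
pose P := fun S : {set tup p n k} =>
  [&& S \subset M, [forall s in S, [forall x in S, (s != x) ==> ~~ conf I1 s x]] & (#|S| < N)%nat].
have P0 : P set0.
  apply/and3P; split; [exact: sub0set| |by rewrite cards0; lia].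
  by apply/forall_inP => s; rewrite inE.
have [S maxS] := @ex_maxset _ P (ex_intro _ set0 P0).
have /and3P [SM Sdisj SN] := maxsetp maxS.
have Sd : forall s x, s \in S -> x \in S -> s != x -> ~~ conf I1 s x.
  move=> s x sS xS sx; move/forall_inP: Sdisj => /(_ s sS) /forall_inP /(_ x xS).
  by rewrite sx.
have cover : (N <= #|S|.+1)%nat \/ (forall x, x \in M -> exists2 s, s \in S & conf I1 s x).
  case: (leqP N #|S|.+1) => h; [by left|right].
  move=> x xM.
  case: (boolP [exists s in S, conf I1 s x]) => [/exists_inP [s sS cs]|]; first by exists s.
  rewrite negb_exists_in => /forall_inP nc.
  case: (boolP (x \in S)) => xS; first by exists x => //; exact: conf_refl.
  exfalso.
  have PB : P (x |: S).
    apply/and3P; split.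
    - apply/subsetP => y; rewrite !inE => /orP [/eqP -> //|yS].
      exact: (subsetP SM).
    - apply/forall_inP => s; rewrite !inE => hs; apply/forall_inP => y; rewrite !inE => hy.
      apply/implyP => sy.
      case/orP: hs => [/eqP es|sS]; case/orP: hy => [/eqP ey|yS].
      + by move: sy; rewrite es ey eqxx.
      + by rewrite es conf_sym; apply: nc.
      + by rewrite ey; apply: nc.
      + exact: Sd.
    - by rewrite cardsU1 xS.
  have := maxsetsup maxS PB (subsetUr _ _).
  by move/setP/(_ x); rewrite setU11 (negbTE xS).
have sM : forall s, s \in M -> s \in kcycles X := fun s hs => subsetP MX s hs.
have notbad : forall s, s \in M ->
    INR #|[set y in kcycles X | agree_on I2 y s]| < D2.
  move=> s hs; have := Hii s hs; rewrite /bad /ext_count -/b -/al -/D2.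
  by move/Rnot_ge_lt.
have confc : forall s, s \in M ->
    INR #|[set x in M | conf I1 s x]| <= (INR a + 4) * theta * delta' * E.
  move=> s sM'.
  have sX := sM s sM'.
  have [hsX _] := kcyclesP sX.
  pose A1 := [set x in M | [exists i in I1, x i == s i]].
  pose A2 := [set x in M | s1 I1 x == s1 I1 s].
  have sub : [set x in M | conf I1 s x] \subset A1 :|: A2.
    apply/subsetP => x; rewrite !inE /conf => /andP [xM /orP [h|h]]; by rewrite xM h ?orbT.
  have c12 : (#|[set x in M | conf I1 s x]| <= #|A1| + #|A2|)%nat.
    exact: (leq_trans (subset_leq_card sub) (leq_card_setU A1 A2).1).
  have HA1 : INR #|A1| <= INR a * (theta * delta' * E).
    apply: (@fiber_bound _ _ A1 I1 (fun x => odflt i0 [pick i in I1 | x i == s i])).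
      move=> x; rewrite inE => /andP [_ /exists_inP [i iI ei]].
      case: pickP => [j /andP [jI _] //|none].
      by move: (none i); rewrite iI ei.
    move=> i iI.
    apply: Rle_trans (Hdeg i (s i) (hsX i)).
    apply: le_INR; apply/leP; apply: subset_leq_card; apply/subsetP => x.
    rewrite !inE => /andP [/andP [xM /exists_inP [i' i'I ei']]].
    case: pickP => [j /andP [jI ej] /= /eqP eji|none /= /eqP e0].
      by rewrite -eji ej andbT; move: (sM x xM); rewrite inE.
    by move: (none i'); rewrite i'I ei'.
  have HA2 : INR #|A2| <= 4 * (theta * delta') * E.
    pose T := [set y in kcycles X | agree_on I2 y s].
    have h := @fiber_bound _ _ A2 T (phi I1 s) D1.
    have h' : INR #|A2| <= INR #|T| * D1.
      apply: h.
        move=> x; rewrite inE => /andP [xM /eqP ex].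
        exact: (phi_in I1 I2 s x dI sX (sM x xM) ex).
      move=> y; rewrite inE => /andP [yX _].
      have yI : is_Ituple X I1 y.
        have [hy _] := kcyclesP yX.
        by apply/forall_inP => i _; apply: hy.
      apply: Rle_trans (Hi y yI).
      apply: le_INR; apply/leP; apply: subset_leq_card; apply/subsetP => x.
      rewrite !inE => /andP [/andP [xM _] /eqP <-].
      by rewrite xM phi_agree.
    have := notbad s sM'; rewrite -/T => hT.
    rewrite -D12.
    apply: Rle_trans h' _.
    rewrite Rmult_comm; apply: Rmult_le_compat_l => //; lra.
  apply: Rle_trans (le_INR _ _ (elimT leP c12)) _.
  rewrite plus_INR; lra.
have a2R : 2 <= INR a by apply: (le_INR 2); apply/leP.
have hS : r * NN p n <= (INR a + 4) * theta * INR #|S|.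
  case: cover => [hc|hc].
    have eN : #|S|.+1 = N by apply/eqP; rewrite eqn_leq hc SN.
    have eS : INR #|S| + 1 = NN p n by rewrite NNe -eN S_INR.
    have h0 : 0 <= INR #|S| by apply: pos_INR.
    have h1 : NN p n <= 2 * INR #|S| by lra.
    have h2 : 6 * INR #|S| <= (INR a + 4) * theta * INR #|S|.
      apply: Rmult_le_compat_r => //; nra.
    nra.
  have hM : INR #|M| <= INR #|S| * ((INR a + 4) * theta * delta' * E).
    apply: (@fiber_bound _ _ M S (fun x => odflt x [pick s in S | conf I1 s x])).
      move=> x xM; case: pickP => [s /andP [sS _] //|none] /=.
      by have [s sS cs] := hc x xM; move: (none s); rewrite sS cs.
    move=> s sS; apply: Rle_trans (confc s (subsetP SM s sS)).
    apply: le_INR; apply/leP; apply: subset_leq_card; apply/subsetP => x.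
    rewrite !inE => /andP [xM]; case: pickP => [s' /andP [s'S cs'] /= /eqP <-|none] /=.
      by rewrite xM.
    by have [s'' sS'' cs''] := hc x xM; move: (none s''); rewrite sS'' cs''.
  have ek : NN p n ^ (k - 1) = NN p n * E.
    by rewrite /E; have -> : (k - 1 = (k - 2).+1)%nat by lia.
  rewrite ek in HM.
  have hde : 0 < delta' * E by nra.
  apply: (Rmult_le_reg_r (delta' * E)) => //.
  nra.
pose W := Wset I1 S.
pose Z := Zs X I1 W.
pose S' := [set psi I1 s | s in S].
pose eps := INR #|S| / NN p n.
have NNp : 0 < NN p n by lra.
have S0 : 0 <= INR #|S| by apply: pos_INR.
have Spos : 0 < INR #|S|.
  have h := Rmult_lt_0_compat _ _ r0 NNp.
  case: S0 => // h0; rewrite -h0 Rmult_0_r in hS; lra.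
have Slt : INR #|S| < NN p n by rewrite NNe; apply: lt_INR; apply/ltP.
have eps01 : 0 < eps < 1.
  split; first by apply: Rdiv_lt_0_compat.
  rewrite /eps /Rdiv; apply: (Rmult_lt_reg_r (NN p n)) => //.
  rewrite Rmult_assoc Rinv_l; lra.
have psiI : {in S &, injective (psi I1)}.
  move=> s s' sS s'S e; apply/eqP; apply/negPn/negP => ne.
  by have := psi_disj I1 s s' (Sd s s' sS s'S ne) ord_max; rewrite e.
have hyp3 : (3 <= a.+1)%nat by lia.
have hypk : (a.+1 < k)%nat by lia.
have exS' : exists S0 : {set tup p n a.+1},
    S0 \subset kcycles Z /\
    (forall x y, x \in S0 -> y \in S0 -> x <> y -> disjoint_tup x y) /\
    INR #|S0| >= eps * NN p n.
  exists S'; split; [|split].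
  - apply/subsetP => z /imsetP [s sS ->].
    by apply: psi_in; [exact: (sM s (subsetP SM s sS)) | exact: Wset_in].
  - move=> x y /imsetP [s sS ->] /imsetP [s' s'S ->] ne.
    apply: psi_disj; apply: Sd => //; apply/eqP => e; apply: ne; by rewrite e.
  - rewrite /S' card_in_imset // /eps; apply: Req_ge.
    rewrite /Rdiv Rmult_assoc Rinv_l ?Rmult_1_r //; lra.
have Hlow := HH a.+1 hyp3 hypk eps eps01 n n1 Z exS'.
have HupW : INR #|kcycles Z| <= INR #|W| * D2.
  apply: (@fiber_bound _ _ (kcycles Z) W (fun z => z ord_max)).
    by move=> z zZ; have [hz _] := kcyclesP zZ; have := hz ord_max; rewrite /Z Zs_max.
  move=> w wW; have [s sS ew] := Wset_inv I1 S w wW.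
  have sMs := subsetP SM s sS.
  apply: Rlt_le; apply: Rle_lt_trans (notbad s sMs).
  apply: le_INR; apply/leP.
  rewrite -(card_in_imset (f := chi I1 s i0 i0I)).
    apply: subset_leq_card; apply/subsetP => y /imsetP [z]; rewrite inE => /andP [zZ /eqP ez] ->.
    by apply: (chi_in I1 I2 s i0 i0I W z dI (sM s sMs) zZ); rewrite ez ew.
  move=> z z'; rewrite !inE => /andP [_ /eqP e1] /andP [_ /eqP e2].
  by apply: chi_inj; rewrite e1 e2.
have WS : INR #|W| <= INR #|S| by apply: le_INR; apply/leP; apply: leq_imset_card.
have Hup : INR #|kcycles Z| <= INR #|S| * D2.
  apply: Rle_trans HupW _; apply: Rmult_le_compat_r => //.
have eb : (k - b - 1 = a - 1)%nat by lia.
have ea : (a.+1 - 1 = (a - 1).+1)%nat by lia.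
have ea2 : (a.+1 - 2 = a - 1)%nat by lia.
move/Rge_le: Hlow; rewrite ea => Hlow.
have Hc := Rle_trans _ _ _ Hlow Hup.
rewrite /D2 eb /= in Hc.
set Q := NN p n ^ (a - 1) in Hc.
have Qpos : 0 < Q by apply: pow_lt.
have R1 : Rpower eps (Ck c a.+1) <= 2 * eps * al ^ (a - 1).
  have eS : INR #|S| = eps * NN p n by rewrite /eps /Rdiv Rmult_assoc Rinv_l ?Rmult_1_r //; lra.
  rewrite eS in Hc.
  apply: (Rmult_le_reg_r (NN p n * Q)); first by apply: Rmult_lt_0_compat.
  lra.
have alA : al ^ (a - 1) = Rpower (theta * delta') (/ INR (k - 2) * INR (a - 1)).
  by rewrite -Rpower_pow // /al /alpha Rpower_mult.
rewrite alA /Ck ea2 in R1.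
rewrite /Ck.
apply: (final_real (INR (a - 1)) (INR (k - 2)) (C3 c - 1) eps r theta delta' (INR a + 4) (INR k)).
- by apply: (le_INR 1); apply/leP; lia.
- rewrite -S_INR; apply: le_INR; apply/leP; lia.
- lra.
- exact: eps01.
- by split.
- exact: th1.
- exact: dpos.
- lra.
- have : (a + 2 <= k)%coq_nat by apply/leP; lia.
  move/le_INR; rewrite plus_INR /=; lra.
- rewrite /eps; apply: (Rmult_le_reg_r (NN p n)) => //.
  rewrite !Rmult_assoc /Rdiv Rinv_l ?Rmult_1_r; [|lra].
  rewrite -Rmult_assoc; lra.
- exact: R1.
Qed.
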